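(* Let $p_1\le p_2\le\dots\le p_m$ be a probability distribution on $m$ urns, and let $C$ be the number of balls thrown independently into the urns according to this distribution until every urn contains at least one ball. Then, for large values of $m$, \[ \frac{1}{p_1}\le E[C]\le 2\,H_m\,\frac{1}{p_1}, \] where $H_m=\sum_{j=1}^m 1/j$. *)

(* Defs.v *)
From HB Require Import structures.
From mathcomp Require Import all_boot all_order all_algebra.
From mathcomp Require Import all_classical all_reals all_analysis.
Set Implicit Arguments. Unset Strict Implicit. Unset Printing Implicit Defensive.
Import Order.TTheory GRing.Theory Num.Theory.
Local Open Scope ring_scope.

(* Balls are thrown independently; ball k lands in urn s k with prob p (s k).
   [cc_cdf p t] = P(C <= t) = probability that after t throws every urn is
   nonempty, computed over the product space of outcome sequences. *)
Definition cc_cdf (R : realType) (m : nat) (p : 'I_m -> R) (t : nat) : R :=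
  \sum_(s : {ffun 'I_t -> 'I_m} | [forall i : 'I_m, exists k : 'I_t, s k == i])
     \prod_(k < t) p (s k).

Definition cc_pmf (R : realType) (m : nat) (p : 'I_m -> R) (t : nat) : R :=
  cc_cdf p t - cc_cdf p t.-1.

Definition cc_expect (R : realType) (m : nat) (p : 'I_m -> R) : \bar R :=
  (\sum_(1 <= t <oo) ((t%:R * cc_pmf p t)%:E))%E.

Definition harmonic_num (R : realType) (m : nat) : R := \sum_(j < m) (j.+1%:R)^-1.

(* Main.v *)
Require Import Defs.
From HB Require Import structures.
From mathcomp Require Import all_boot all_order all_algebra.
From mathcomp Require Import all_classical all_reals all_analysis.
From mathcomp Require Import ring lra.
Import Order.TTheory GRing.Theory Num.Theory.
Local Open Scope ring_scope.

Section Comb.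
Variables (R : realType) (m : nat) (p : 'I_m -> R).
Hypothesis p_ge0 : forall i, 0 <= p i.
Hypothesis p_sum : \sum_(i < m) p i = 1.

Definition cover t (s : {ffun 'I_t -> 'I_m}) := [forall i : 'I_m, exists k : 'I_t, s k == i].
Definition PP t (s : {ffun 'I_t -> 'I_m}) : R := \prod_(k < t) p (s k).

Arguments PP {t}.
Arguments cover {t}.
Lemma PP_ge0 t (s : {ffun 'I_t -> 'I_m}) : 0 <= PP s.
Proof. by apply: prodr_ge0 => k _. Qed.

Lemma sum_weight t (w : 'I_m -> R) :
  \sum_(s : {ffun 'I_t -> 'I_m}) \prod_(k < t) w (s k) = (\sum_j w j) ^+ t.
Proof.
rewrite -[in RHS](card_ord t) -prodr_const.
by rewrite (bigA_distr_bigA (fun (k : 'I_t) j => w j)).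
Qed.

Lemma total t : \sum_(s : {ffun 'I_t -> 'I_m}) PP s = 1.
Proof. by rewrite /PP sum_weight p_sum expr1n. Qed.

Definition G t := 1 - cc_cdf p t.

Lemma GE t : G t = \sum_(s : {ffun 'I_t -> 'I_m} | ~~ cover s) PP s.
Proof.
rewrite /G -(total t) (bigID (@cover t)) /=.
have -> : cc_cdf p t = \sum_(s : {ffun 'I_t -> 'I_m} | cover s) PP s by [].
lra.
Qed.

Definition ind t i (s : {ffun 'I_t -> 'I_m}) : R := ([forall k, s k != i])%:R.

Arguments ind {t}.
Lemma sum_ind t i : \sum_(s : {ffun 'I_t -> 'I_m}) ind i s * PP s = (1 - p i) ^+ t.
Proof.
have -> : 1 - p i = \sum_j p j * (j != i)%:R.
  have -> : \sum_j p j * (j != i)%:R = \sum_(j | j != i) p j.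
    rewrite (bigD1 i) //= eqxx mulr0 add0r.
    by apply: eq_bigr => j ji; rewrite ji /= mulr1.
  rewrite -p_sum (bigD1 i) //=; lra.
rewrite -sum_weight; apply: eq_bigr => s _.
rewrite big_split /= mulrC /PP; congr (_ * _).
rewrite /ind; case: (boolP [forall k, s k != i]) => H.
  by rewrite big1 // => k _; rewrite (forallP H k).
move: H; rewrite negb_forall => /existsP [k]; rewrite negbK => /eqP sk.
by rewrite (bigD1 k) //= sk eqxx mul0r.
Qed.

Lemma G_le t : G t <= \sum_i (1 - p i) ^+ t.
Proof.
rewrite GE (eq_bigr (fun i => \sum_s ind i s * PP (t:=t) s)); last first.
  by move=> i _; rewrite sum_ind.
rewrite exchange_big /= [leLHS]big_mkcond /=.
apply: ler_sum => s _; case: ifP => cov; last first.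
  by apply: sumr_ge0 => i _; apply: mulr_ge0 => //; apply: PP_ge0.
rewrite -big_distrl /= ler_peMl //; first exact: PP_ge0.
move: cov; rewrite /cover negb_forall => /existsP [i]; rewrite negb_exists => /forallP H.
rewrite (bigD1 i) //= /ind.
have -> : [forall k, s k != i] by apply/forallP.
rewrite lerDl; apply: sumr_ge0 => j _; exact: ler0n.
Qed.

Lemma G_ge t i : (1 - p i) ^+ t <= G t.
Proof.
rewrite -sum_ind GE [leRHS]big_mkcond /=.
apply: ler_sum => s _; rewrite /ind; case: (boolP [forall k, s k != i]) => H.
  have -> : ~~ cover s.
    apply/negP => /forallP/(_ i)/existsP [k /eqP sk].
    by move: (forallP H k); rewrite sk eqxx.
  by rewrite mul1r.
by rewrite mul0r; case: ifP => _ //; apply: PP_ge0.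
Qed.

Lemma cdf0 (hm : (0 < m)%N) : cc_cdf p 0 = 0.
Proof.
rewrite /cc_cdf big_pred0 // => s; apply/negbTE/negP.
by move=> /forallP/(_ (Ordinal hm))/existsP [[k hk]].
Qed.

Lemma cdf_ge0 t : 0 <= cc_cdf p t.
Proof. by apply: sumr_ge0 => s _; apply: PP_ge0. Qed.


Definition hh t (s : {ffun 'I_t.+1 -> 'I_m}) : {ffun 'I_t -> 'I_m} * 'I_m :=
  ([ffun k => s (lift ord_max k)], s ord_max).
Definition gg t (x : {ffun 'I_t -> 'I_m} * 'I_m) : {ffun 'I_t.+1 -> 'I_m} :=
  [ffun k => if unlift ord_max k is Some k' then x.1 k' else x.2].
Arguments hh {t}.
Arguments gg {t}.
Lemma hhK t : cancel (@hh t) (@gg t).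
Proof.
move=> s; apply/ffunP => k; rewrite ffunE; case: unliftP => [j ->|->] /=; by rewrite ?ffunE.
Qed.
Lemma ggK t : cancel (@gg t) (@hh t).
Proof.
move=> [f j]; rewrite /hh /gg /=; congr pair.
  by apply/ffunP => k; rewrite !ffunE liftK.
by rewrite ffunE unlift_none.
Qed.

Lemma cdf_mono t : cc_cdf p t <= cc_cdf p t.+1.
Proof.
have E : cc_cdf p t = \sum_(s : {ffun 'I_t -> 'I_m} | cover s) \sum_j PP s * p j.
  by apply: eq_bigr => s _; rewrite -big_distrr /= p_sum mulr1.
rewrite E pair_big_dep /= (reindex (@hh t)) /=; last first.
  by apply: onW_bij; exists (@gg t); [exact: hhK | exact: ggK].
rewrite [leRHS]big_mkcond [leLHS]big_mkcond; apply: ler_sum => s _.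
have -> : PP (hh s).1 * p (hh s).2 = PP s.
  rewrite /PP [in RHS]big_ord_recr /=; congr (_ * _); apply: eq_bigr => k _.
  rewrite ffunE; congr (p (s _)); by apply: val_inj => /=; rewrite /bump leqNgt ltn_ord.
case: ifP => c1; case: ifP => c2 //; try by apply: PP_ge0.
exfalso; move: c1; rewrite andbT => /forallP H; move/negbT: c2 => /negP; apply.
apply/forallP => i; have /existsP [k /eqP <-] := H i.
by apply/existsP; exists (lift ord_max k); rewrite /hh /= ffunE.
Qed.

End Comb.
Lemma leX {R : realType} (a b : R) n : 0 <= a -> a <= b -> a ^+ n <= b ^+ n.
Proof. move=> a0 ab; apply: lerXn2r => //; rewrite nnegrE //; exact: le_trans ab. Qed.

Lemma geo_id {R : realType} (q : R) n : (\sum_(u < n) q ^+ u) * (1 - q) = 1 - q ^+ n.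
Proof.
elim: n => [|n IH]; first by rewrite big_ord0 expr0; ring.
rewrite big_ord_recr /= mulrDl IH exprS; ring.
Qed.

Lemma geo_bound {R : realType} (q : R) n : 0 <= q -> q < 1 ->
  \sum_(u < n) q ^+ u <= (1 - q)^-1.
Proof.
move=> q0 q1.
set y := (1 - q)^-1.
have hy : y * (1 - q) = 1 by rewrite mulVf // subr_eq0 gt_eqF.
have y0 : 0 < y by rewrite invr_gt0 subr_gt0.
have qn : 0 <= q ^+ n by apply: exprn_ge0.
have := geo_id q n; set S := \sum_(u < n) _ => hS.
have -> : S = S * (1 - q) * y by rewrite -mulrA [(1 - q) * y]mulrC hy mulr1.
rewrite hS; nra.
Qed.

Lemma sum_bound {R : realType} (g : nat -> R) (q : R) t0 n : 0 <= q -> q < 1 ->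
  (forall t, 0 <= g t <= 1) -> (forall t, (t0 <= t)%N -> g t <= q ^+ (t - t0)) ->
  \sum_(t < n) g t <= t0%:R + (1 - q)^-1.
Proof.
move=> q0 q1 g01 gq.
have A : \sum_(t < n) g t <= \sum_(0 <= t < t0 + n) g t.
  rewrite (big_cat_nat (n := n)) //= ?leq_addl // big_mkord lerDl.
  by apply: sumr_ge0 => t _; case/andP: (g01 t).
apply: (le_trans A); rewrite (big_cat_nat (n := t0)) //= ?leq_addr //.
apply: lerD.
  have -> : t0%:R = \sum_(0 <= t < t0) (1 : R) by rewrite sumr_const_nat subn0.
  by apply: ler_sum => t _; case/andP: (g01 t).
rewrite -{1}[t0]add0n big_addn addKn.
apply: le_trans (geo_bound q n q0 q1).
rewrite big_mkord; apply: ler_sum => t _.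
by rewrite (le_trans (gq _ (leq_addl _ _))) // addnK.
Qed.

Lemma partial_id {R : realType} (F : nat -> R) n : F 0%N = 0 ->
  \sum_(1 <= t < n.+1) t%:R * (F t - F t.-1) =
  \sum_(t < n) (1 - F t) - n%:R * (1 - F n).
Proof.
move=> F0; elim: n => [|n IH].
  by rewrite big_geq // big_ord0 F0; ring.
rewrite big_nat_recr //= IH big_ord_recr /= -natr1; ring.
Qed.

Lemma expH {R : realType} m : (m.+1)%:R <= expR (harmonic_num R m).
Proof.
elim: m => [|m IH].
  by rewrite /harmonic_num big_ord0 expR0.
rewrite /harmonic_num big_ord_recr /= -/(harmonic_num R m) expRD.
set k : R := m.+1%:R.
have k0 : 0 < k by rewrite ltr0n.
have kk : k * k^-1 = 1 by rewrite mulfV // gt_eqF.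
apply: le_trans (ler_pM _ _ IH (expR_ge1Dx _)) => //.
  by rewrite -natr1 -/k mulrDr mulr1 kk.
by rewrite addr_ge0 // invr_ge0 ltW.
Qed.

Lemma H_ge {R : realType} m : (2 <= m)%N -> 3 / 2 <= harmonic_num R m.
Proof.
case: m => [|[|k]] // _.
rewrite /harmonic_num big_ord_recl big_ord_recl /= invr1.
have -> : ((bump 0 0).+1%:R : R) = 2 by [].
apply: (@le_trans _ _ (1 + (2^-1 + 0))); first lra.
rewrite lerD2l lerD2l; apply: sumr_ge0 => i _; by rewrite invr_ge0 ler0n.
Qed.

Lemma binom {R : realType} (x : R) n : 0 <= x ->
  1 + n%:R * x + (n%:R * (n%:R - 1) / 2) * x ^+ 2 <= (1 + x) ^+ n.
Proof.
move=> x0; elim: n => [|n IH]; first by rewrite expr0; lra.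
have hn : 0 <= n%:R * (n%:R - 1) :> R.
  case: (n) => [|n']; first by rewrite mul0r.
  rewrite -natr1; have := ler0n R n'; nra.
have hx3 : 0 <= n%:R * (n%:R - 1) * x ^+ 3 :> R by apply: mulr_ge0 => //; exact: exprn_ge0.
rewrite [(1 + x) ^+ n.+1]exprS.
have hx1 : 0 <= 1 + x by lra.
apply: (le_trans _ (ler_wpM2l hx1 IH)).
rewrite -natr1; move: hx3; rewrite !exprS expr0; nra.
Qed.

Lemma lower_aux {R : realType} (x e : R) (m : nat) : 0 < x -> x <= 1 -> m%:R * x <= 1 -> 0 < e ->
  exists n : nat, (1 - x) ^+ n * x^-1 + n%:R * m%:R * (1 - x) ^+ n <= e.
Proof.
move=> x0 x1 mx e0.
set K := (Num.truncn (4 / (e * x ^+ 3))).+1.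
exists K.+1.
set q := 1 - x; set a := q ^+ K.+1.
have q0 : 0 <= q by rewrite /q; lra.
have a0 : 0 <= a by apply: exprn_ge0.
have ex3 : 0 < e * x ^+ 3 by apply: mulr_gt0 => //; apply: exprn_gt0.
have hK : 4 < K%:R * (e * x ^+ 3).
  have := truncn_itv (ltW (divr_gt0 (ltr0n R 4) ex3)) => /andP [_ h].
  by rewrite -(ltr_pM2r ex3) mulfVK ?gt_eqF // in h.
have K0 : 0 <= K%:R :> R by apply: ler0n.
have hq : a * (1 + x) ^+ K.+1 <= 1.
  rewrite /a -exprMn; apply: exprn_ile1; rewrite /q; nra.
have hb := binom x K.+1 (ltW x0).
have hx2 : 0 <= x ^+ 2 by rewrite exprn_ge0 // ltW.
have S0 : a * ((K.+1%:R * (K.+1%:R - 1) / 2) * x ^+ 2) <= 1.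
  apply: le_trans hq; apply: ler_wpM2l => //.
  apply: le_trans hb; rewrite -addrA lerDr.
  have := ler0n R K.+1; nra.
rewrite -natr1 in S0 *.
have S0' : a * (K%:R + 1) * K%:R * x ^+ 2 <= 2 by move: S0; rewrite addrK; lra.
have S1 : a * (K%:R + 2) * (K%:R * x ^+ 2) <= 4 by nra.
have S2 : a * (K%:R + 2) <= e * x.
  have Kx : 0 < K%:R * x ^+ 2.
    apply: mulr_gt0; first by rewrite /K ltr0n.
    by apply: exprn_gt0.
  rewrite -(ler_pM2r Kx); apply: le_trans S1 _.
  move: hK; rewrite !exprS expr0; nra.
set y := x^-1.
have xy : x * y = 1 by rewrite mulfV // gt_eqF.
have y0 : 0 < y by rewrite invr_gt0.
have my : m%:R <= y.
  by rewrite -(ler_pM2r x0) [y * x]mulrC xy.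
have m0 : 0 <= m%:R :> R by apply: ler0n.
have T1 : K.+1%:R * m%:R * a <= K.+1%:R * y * a.
  by apply: ler_wpM2r => //; apply: ler_wpM2l => //; apply: ler0n.
have T2 : a * (K%:R + 2) * y <= e * x * y by apply: ler_wpM2r => //; apply: ltW.
rewrite -[e * x * y]mulrA xy mulr1 in T2.
rewrite -/y; move: T1 T2; rewrite -natr1; nra.
Qed.

Theorem theorem8 (R : realType) : exists M : nat, forall (m : nat) (hm : (0 < m)%N),
  (M <= m)%N ->
  forall p : 'I_m -> R,
    (forall i, 0 < p i) ->
    \sum_(i < m) p i = 1 ->
    (forall i j : 'I_m, (i <= j)%N -> p i <= p j) ->
    let p1 := p (Ordinal hm) in
    ((p1^-1)%:E <= cc_expect p)%E /\ (cc_expect p <= (2 * @Defs.harmonic_num R m / p1)%:E)%E.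
Proof.
exists 2%N => m hm m2 p p0 psum pmono p1.
have pge0 : forall i, 0 <= p i by move=> i; apply: ltW.
have x0 : 0 < p1 := p0 _.
have xle : forall i, p1 <= p i by move=> i; apply: pmono.
have pile1 : forall i, p i <= 1.
  move=> i; rewrite -psum (bigD1 i) //= lerDl; apply: sumr_ge0 => j _; exact: pge0.
have mx : m%:R * p1 <= 1.
  have : \sum_(i < m) p1 <= \sum_(i < m) p i by apply: ler_sum => i _; apply: xle.
  by rewrite sumr_const card_ord psum mulr_natl.
have m2R : 2 <= m%:R :> R by rewrite ler_nat.
have x1 : p1 <= 1 by apply: pile1.
set q := 1 - p1.
have q0 : 0 <= q by rewrite /q; lra.
have Gle t : G _ _ p t <= m%:R * q ^+ t.
  apply: (le_trans (G_le _ _ p pge0 psum t)).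
  apply: (@le_trans _ _ (\sum_(i < m) q ^+ t)).
    apply: ler_sum => i _; apply: leX; first by have := pile1 i; lra.
    by rewrite /q; have := xle i; lra.
  by rewrite sumr_const card_ord mulr_natl.
have Gge t : q ^+ t <= G _ _ p t by apply: (G_ge _ _ p pge0 psum t (Ordinal hm)).
have G01 t : 0 <= G _ _ p t <= 1.
  apply/andP; split; first by apply: le_trans (Gge t); apply: exprn_ge0.
  by rewrite /G; have := cdf_ge0 _ _ p pge0 t; lra.
have F0 := cdf0 _ _ p hm.
have tnn : forall t, (1 <= t)%N -> xpredT t -> (0 <= (t%:R * cc_pmf p t)%:E)%E.
  move=> [|t] //= _ _; rewrite lee_fin mulr_ge0 // subr_ge0; exact: (cdf_mono _ _ p pge0 psum).
have PI n : \sum_(1 <= t < n.+1) t%:R * cc_pmf p t = \sum_(t < n) G _ _ p t - n%:R * G _ _ p n.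
  exact: (partial_id (cc_cdf p) n F0).
set H := harmonic_num R m.
have H32 : 3 / 2 <= H by apply: H_ge.
have x12 : p1 <= 1 / 2 by nra.
set y := p1^-1.
have xy : p1 * y = 1 by rewrite mulfV // gt_eqF.
have y0 : 0 < y by rewrite invr_gt0.
have qx : 1 - q = p1 by rewrite /q; ring.
have sumG n : \sum_(t < n) G _ _ p t <= H * y + 1 + y.
  set t0 := (Num.truncn (H / p1)).+1.
  have Hx0 : 0 <= H / p1 by apply: divr_ge0; lra.
  have [ht1 ht2] : (Num.truncn (H / p1))%:R <= H / p1 /\ H / p1 < t0%:R.
    by have /andP[a b] := truncn_itv Hx0.
  have hq0 : m%:R * q ^+ t0 <= 1.
    have e1 : q ^+ t0 <= expR (- p1) ^+ t0.
      by apply: leX => //; rewrite /q; have := expR_ge1Dx (- p1); lra.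
    have e2 : expR (- p1) ^+ t0 <= (expR H)^-1.
      rewrite -expRM_natl -expRN ler_expR.
      have : H < t0%:R * p1 by rewrite -ltr_pdivrMr.
      nra.
    have eH : (m.+1)%:R <= expR H := expH m.
    have E0 : 0 < expR H := expR_gt0 H.
    apply: (le_trans (ler_wpM2l (ler0n _ m) (le_trans e1 e2))).
    rewrite ler_pdivrMr // mul1r; apply: le_trans eH; by rewrite ler_nat.
  have Gq t : (t0 <= t)%N -> G _ _ p t <= q ^+ (t - t0).
    move=> h; apply: le_trans (Gle t) _.
    have -> : q ^+ t = q ^+ t0 * q ^+ (t - t0) by rewrite -exprD subnKC.
    rewrite mulrA; apply: ler_piMl => //; exact: exprn_ge0.
  have q1 : q < 1 by rewrite /q; lra.
  apply: le_trans (sum_bound _ _ _ n q0 q1 G01 Gq) _.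
  rewrite qx -/y /t0 -natr1.
  move: ht1; rewrite -/y; lra.
split.
  apply/lee_addgt0Pr => e e0.
  have [n hn] := lower_aux p1 e m x0 x1 mx e0.
  rewrite -/q -/y in hn.
  have L := @nneseries_lim_ge R (fun t => (t%:R * cc_pmf p t)%:E) xpredT 1%N n.+1 tnn.
  apply: le_trans (leeD2r e%:E L).
  rewrite sumEFin -EFinD lee_fin PI.
  have S1 : \sum_(t < n) q ^+ t <= \sum_(t < n) G _ _ p t by apply: ler_sum => t _; apply: Gge.
  have S2 : n%:R * G _ _ p n <= n%:R * (m%:R * q ^+ n) by apply: ler_wpM2l => //; apply: Gle.
  have S3 := geo_id q n; rewrite qx in S3.
  have S4 : \sum_(t < n) q ^+ t = (1 - q ^+ n) * y by rewrite -S3 -mulrA xy mulr1.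
  rewrite S4 in S1.
  move: S1 S2 hn; rewrite mulrA; nra.
rewrite /cc_expect.
apply: (lime_le (is_cvg_nneseries tnn)); apply: nearW => n.
rewrite sumEFin lee_fin.
have Hy : H * y + 1 + y <= 2 * H / p1.
  have : (1 + p1) * y <= H * y by apply: ler_wpM2r; lra.
  rewrite mulrDl mul1r xy -/y; lra.
case: n => [|n].
  rewrite big_geq //; apply: le_trans Hy; nra.
rewrite PI; apply: le_trans Hy; have := sumG n; have /andP[g0 _] := G01 n.
have := ler0n R n; nra.
Qed.
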